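(* For simple random walk on a finite tree $T=(S,E)$ with a unique self-loop added at one vertex, for every $\varepsilon\in(0,1)$, \[ t_{\rm mix}(\varepsilon)\le\big(2\,\mathrm{diam}(T)+1\big)|E|\,\log\!\Big(\frac{2|E|}{\varepsilon}\Big). \]
   Context: $|E|$ counts the self-loop as one edge. Degrees count the self-loop twice; simple random walk moves from $v$ along a uniformly chosen edge-end at $v$, with transition matrix $P$ and stationary distribution $\pi(v)=\deg(v)/\sum_z\deg(z)$. $t_{\rm mix}(\varepsilon)=\min\{t:\max_x\|P^t(x,\cdot)-\pi\|_{TV}\le\varepsilon\}$. $\mathrm{diam}(T)$ is the maximal graph distance between two vertices. *)

(* Defs.v *)
From HB Require Import structures.
From mathcomp Require Import all_boot all_order all_algebra.
From mathcomp Require Import all_classical all_reals all_analysis.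
Set Implicit Arguments. Unset Strict Implicit. Unset Printing Implicit Defensive.
Import Order.TTheory GRing.Theory Num.Theory.
Local Open Scope ring_scope.

Section Graphs.
Variable S : finType.

Definition simple_graph (e : rel S) : Prop :=
  symmetric e /\ irreflexive e.

Definition acyclic (e : rel S) : Prop :=
  forall c : seq S, uniq c -> (2 < size c)%N -> ~~ cycle e c.

Definition is_tree (e : rel S) : Prop :=
  simple_graph e /\ (forall x y : S, connect e x y) /\ acyclic e.

Definition nedges (e : rel S) : nat := (#|[set p : S * S | e p.1 p.2]| %/ 2)%N.

Fixpoint reach (e : rel S) (n : nat) (x y : S) : bool :=
  match n with
  | 0 => x == y
  | n'.+1 => [exists z, e x z && reach e n' z y]
  end.

(* graph distance (minimal walk length); in a connected graph on S the
   distance is < #|S|, so the bounded search is exact there. *)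
Definition gdist (e : rel S) (x y : S) : nat :=
  \big[minn/#|S|]_(n < #|S| | reach e n x y) n.

Definition diam (e : rel S) : nat := \max_(x : S) \max_(y : S) gdist e x y.

(* |E| counts the self-loop as one edge *)
Definition nE (e : rel S) : nat := (nedges e).+1.

(* degree: the self-loop counts twice *)
Definition deg (e : rel S) (v0 v : S) : nat :=
  (#|[set y | e v y]| + 2 * (v == v0))%N.

Variable R : realType.

(* simple random walk: move along a uniformly chosen edge-end at x *)
Definition srw (e : rel S) (v0 : S) (x y : S) : R :=
  ((e x y)%:R + ((x == v0) && (y == v0))%:R *+ 2) / (deg e v0 x)%:R.

Definition stat (e : rel S) (v0 : S) (v : S) : R :=
  (deg e v0 v)%:R / (\sum_(z : S) (deg e v0 z)%:R).

Fixpoint Ppow (P : S -> S -> R) (t : nat) (x y : S) : R :=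
  match t with
  | 0 => (x == y)%:R
  | t'.+1 => \sum_(z : S) Ppow P t' x z * P z y
  end.

Definition tv_dist (mu nu : S -> R) : R := 2^-1 * \sum_(y : S) `|mu y - nu y|.

Definition dmax (P : S -> S -> R) (pi : S -> R) (t : nat) : R :=
  \big[Num.max/0]_(x : S) tv_dist (Ppow P t x) pi.

Definition is_tmix (P : S -> S -> R) (pi : S -> R) (eps : R) (t : nat) : Prop :=
  dmax P pi t <= eps /\ (forall s, (s < t)%N -> ~ (dmax P pi s <= eps)).

End Graphs.

(* Main.v *)
Require Import Defs.
From HB Require Import structures.
From mathcomp Require Import all_boot all_order all_algebra.
From mathcomp Require Import all_classical all_reals all_analysis.
From mathcomp Require Import ring lra.
Set Implicit Arguments. Unset Strict Implicit. Unset Printing Implicit Defensive.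
Import Order.TTheory GRing.Theory Num.Theory.

Section GraphA.
Variable S : finType.
Variable e : rel S.

Lemma path_reach x p : path e x p -> reach e (size p) x (last x p).
Proof.
elim: p x => [|y p IH] x /=; first by rewrite eqxx.
case/andP=> exy hp; apply/existsP; exists y; rewrite exy /=; exact: IH.
Qed.

Lemma connect_reach x y : connect e x y -> exists2 n, (n < #|S|)%N & reach e n x y.
Proof.
case/connectP=> p hp ->.
case: (shortenP hp) => p' hp' up _.
exists (size p'); last exact: path_reach.
have := max_card (mem (x :: p')).
by rewrite (card_uniqP up).
Qed.

Lemma bigmin_le_seq (I : eqType) (r : seq I) (P : pred I) (F : I -> nat) d i :
  i \in r -> P i -> (\big[minn/d]_(j <- r | P j) F j <= F i)%N.
Proof.
elim: r => [//|j r IH]; rewrite inE big_cons => /orP[/eqP <- -> |hi hP].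
  exact: geq_minl.
case: (P j); last exact: IH.
by apply: leq_trans (geq_minr _ _) _; exact: IH.
Qed.

Lemma gdist_le x y n : (n < #|S|)%N -> reach e n x y -> (gdist e x y <= n)%N.
Proof.
move=> hn hr; rewrite /gdist.
exact: (@bigmin_le_seq _ _ (fun i : 'I_#|S| => reach e i x y) (fun i : 'I_#|S| => nat_of_ord i) _ _ (mem_index_enum (Ordinal hn)) hr).
Qed.

Lemma gdist_attain x y : connect e x y ->
  reach e (gdist e x y) x y /\ (gdist e x y < #|S|)%N.
Proof.
move/connect_reach=> [n hn hr].
have : (gdist e x y == #|S|) || ((gdist e x y < #|S|)%N && reach e (gdist e x y) x y).
  rewrite /gdist; apply: (big_ind (fun v => (v == #|S|) || ((v < #|S|)%N && reach e v x y))).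
  - by rewrite eqxx.
  - by move=> a b ha hb; rewrite /minn; case: ifP.
  - by move=> i hi; rewrite ltn_ord hi orbT.
case/orP => [/eqP h|/andP[h1 h2]]; last by [].
by have := gdist_le hn hr; rewrite h => /(leq_trans hn); rewrite ltnn.
Qed.

Variable v0 : S.
Hypothesis conn : forall x y, connect e x y.

Definition depth x := gdist e x v0.

Lemma depth0 x : depth x = 0%N -> x = v0.
Proof. by move=> h; have [] := gdist_attain (conn x v0); rewrite -/(depth x) h => /eqP. Qed.

Lemma depth_le x : (depth x <= diam e)%N.
Proof.
rewrite /depth /diam.
apply: leq_trans _ (@leq_bigmax _ (fun x => \max_y gdist e x y) x) => /=.
exact: (@leq_bigmax _ (fun y => gdist e x y) v0).
Qed.

Lemma parent_ex x : x != v0 -> exists z, e x z && (depth z < depth x)%N.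
Proof.
move=> hx; have [hr hlt] := gdist_attain (conn x v0).
move: hr hlt; rewrite -/(depth x).
case hd: (depth x) => [|k] /=; first by move=> /eqP h; rewrite h eqxx in hx.
case/existsP=> z /andP[exz hz] hk; exists z; rewrite exz /=.
rewrite ltnS; apply: gdist_le hz; exact: ltnW.
Qed.

Definition par x := odflt v0 [pick z | e x z && (depth z < depth x)%N].

Lemma par_spec x : x != v0 -> e x (par x) && (depth (par x) < depth x)%N.
Proof.
move=> hx; rewrite /par; case: pickP => [z -> //|h].
by have [z hz] := parent_ex hx; rewrite h in hz.
Qed.

End GraphA.

Section Count.
Variable S : finType.
Variable e : rel S.
Hypothesis esym : symmetric e.
Hypothesis eirr : irreflexive e.

Lemma card_sumb (T : finType) (A : {pred T}) : #|A| = (\sum_y ((y \in A) : nat))%N.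
Proof.
rewrite -sum1_card big_mkcond /=; apply: eq_bigr => y _.
by case: (y \in A).
Qed.

Definition halfT := (\sum_x \sum_y (e x y && (enum_rank x < enum_rank y)%N : nat))%N.

Lemma pairs_even : #|[set p : S * S | e p.1 p.2]| = (2 * halfT)%N.
Proof.
rewrite card_sumb.
rewrite (eq_bigr (fun p => (e p.1 p.2 : nat))); last by move=> p _; rewrite inE.
rewrite -(pair_bigA _ (fun x y => (e x y : nat))) /=.
have h : forall x y, (e x y : nat) = ((e x y && (enum_rank x < enum_rank y)%N) : nat) + ((e y x && (enum_rank y < enum_rank x)%N) : nat).
  move=> x y; rewrite (esym y x); case exy: (e x y) => //=.
  have hne : (nat_of_ord (enum_rank x)) != enum_rank y.
    by apply/negP => /eqP /val_inj /enum_rank_inj h; rewrite h eirr in exy.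
  by case: ltngtP hne.
rewrite (eq_bigr (fun x => (\sum_y (((e x y && (enum_rank x < enum_rank y)%N) : nat) + ((e y x && (enum_rank y < enum_rank x)%N) : nat)))%N)); last first.
  by move=> x _; apply: eq_bigr => y _; exact: h.
rewrite (eq_bigr (fun x => (\sum_y ((e x y && (enum_rank x < enum_rank y)%N) : nat) + \sum_y ((e y x && (enum_rank y < enum_rank x)%N) : nat))%N)); last by move=> x _; rewrite big_split.
rewrite big_split /= [X in (_ + X)%N]exchange_big /=.
by rewrite /halfT addnn -mul2n.
Qed.

Variable v0 : S.

Lemma sum_deg : (\sum_x deg e v0 x)%N = (2 * nE e)%N.
Proof.
have h2 : (\sum_x 2 * (x == v0))%N = 2.
  by rewrite (bigD1 v0) //= eqxx muln1 big1 ?addn0 // => x /negbTE ->.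
rewrite /deg big_split /= h2.
rewrite /nE /nedges pairs_even.
have -> : (\sum_x #|[set y | e x y]|)%N = (2 * halfT)%N.
  rewrite -pairs_even card_sumb.
  rewrite (eq_bigr (fun p => (e p.1 p.2 : nat))); last by move=> p _; rewrite inE.
  rewrite -(pair_bigA _ (fun x y => (e x y : nat))) /=.
  by apply: eq_bigr => x _; rewrite card_sumb; apply: eq_bigr => y _; rewrite inE.
by rewrite mulKn // mulnS addnC.
Qed.

End Count.

Local Open Scope ring_scope.

Section Markov.
Variable R : realType.
Variable S : finType.
Variables (w P : S -> S -> R) (pi : S -> R).
Hypothesis w_sym : forall x y, w x y = w y x.
Hypothesis pi_def : forall x, pi x = \sum_y w x y.
Hypothesis pi_gt0 : forall x, 0 < pi x.
Hypothesis pi_sum : \sum_x pi x = 1.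
Hypothesis P_def : forall x y, pi x * P x y = w x y.

Definition ip (u v : S -> R) := \sum_x pi x * u x * v x.
Definition Pop (u : S -> R) := fun x => \sum_y P x y * u y.
Definition mean (u : S -> R) := \sum_x pi x * u x.

Lemma pi_neq0 x : pi x != 0.
Proof. by rewrite gt_eqF. Qed.

Lemma Pdiv x y : P x y = w x y / pi x.
Proof. by rewrite -P_def mulrAC divff ?pi_neq0 ?mul1r. Qed.

Lemma P_row x : \sum_y P x y = 1.
Proof.
apply: (mulfI (pi_neq0 x)); rewrite mulr1 mulr_sumr [RHS]pi_def.
by apply: eq_bigr => y _; rewrite P_def.
Qed.

Lemma ip_sym u v : ip u v = ip v u.
Proof. by apply: eq_bigr => x _; rewrite mulrAC. Qed.

Lemma ip_linl a b u v z : ip (fun x => a * u x + b * v x) z = a * ip u z + b * ip v z.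
Proof. by rewrite /ip !mulr_sumr -big_split; apply: eq_bigr => x _ /=; ring. Qed.

Lemma ip_linr a b u v z : ip z (fun x => a * u x + b * v x) = a * ip z u + b * ip z v.
Proof. by rewrite ip_sym ip_linl !(ip_sym z). Qed.

Lemma Pop_lin a b u v : Pop (fun x => a * u x + b * v x) = fun x => a * Pop u x + b * Pop v x.
Proof.
apply: funext => x; rewrite /Pop !mulr_sumr -big_split.
by apply: eq_bigr => y _ /=; ring.
Qed.

Lemma mean_lin a b u v : mean (fun x => a * u x + b * v x) = a * mean u + b * mean v.
Proof. by rewrite /mean !mulr_sumr -big_split; apply: eq_bigr => x _ /=; ring. Qed.

Lemma B_expand u v : ip u (Pop v) = \sum_x \sum_y w x y * u x * v y.
Proof.
apply: eq_bigr => x _; rewrite mulr_sumr; apply: eq_bigr => y _.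
by rewrite -P_def; ring.
Qed.

Lemma B_sym u v : ip u (Pop v) = ip v (Pop u).
Proof.
rewrite !B_expand exchange_big; apply: eq_bigr => x _; apply: eq_bigr => y _.
by rewrite w_sym; ring.
Qed.

Lemma mean_Pop u : mean (Pop u) = mean u.
Proof.
have -> : mean (Pop u) = \sum_x \sum_y w x y * u y.
  apply: eq_bigr => x _; rewrite mulr_sumr; apply: eq_bigr => y _.
  by rewrite mulrA P_def.
rewrite exchange_big; apply: eq_bigr => y _ /=.
by rewrite -mulr_suml pi_def; congr (_ * _); apply: eq_bigr => x _; rewrite w_sym.
Qed.

Lemma sum_wsq_l g : \sum_x \sum_y w x y * g x ^+ 2 = ip g g.
Proof.
apply: eq_bigr => x _; rewrite -mulr_suml -pi_def; ring.
Qed.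

Lemma sum_wsq_r g : \sum_x \sum_y w x y * g y ^+ 2 = ip g g.
Proof.
rewrite exchange_big -sum_wsq_l; apply: eq_bigr => x _; apply: eq_bigr => y _.
by rewrite w_sym.
Qed.

Lemma QmB g : ip g g - ip g (Pop g) = 2^-1 * \sum_x \sum_y w x y * (g x - g y) ^+ 2.
Proof.
have -> : \sum_x \sum_y w x y * (g x - g y) ^+ 2 =
  \sum_x \sum_y w x y * g x ^+ 2 + \sum_x \sum_y w x y * g y ^+ 2
  - 2 * \sum_x \sum_y w x y * g x * g y.
  rewrite mulr_sumr -big_split -sumrB; apply: eq_bigr => x _.
  rewrite mulr_sumr -big_split -sumrB; apply: eq_bigr => y _ /=; ring.
rewrite sum_wsq_l sum_wsq_r -B_expand; lra.
Qed.

Lemma QpB g : ip g g + ip g (Pop g) = 2^-1 * \sum_x \sum_y w x y * (g x + g y) ^+ 2.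
Proof.
have -> : \sum_x \sum_y w x y * (g x + g y) ^+ 2 =
  \sum_x \sum_y w x y * g x ^+ 2 + \sum_x \sum_y w x y * g y ^+ 2
  + 2 * \sum_x \sum_y w x y * g x * g y.
  rewrite mulr_sumr -!big_split; apply: eq_bigr => x _.
  rewrite mulr_sumr -!big_split; apply: eq_bigr => y _ /=; ring.
rewrite sum_wsq_l sum_wsq_r -B_expand; lra.
Qed.

Lemma contract_L2 (K : R) : 1 < K ->
  (forall g, mean g = 0 -> ip g g <= K * (ip g g - ip g (Pop g))) ->
  (forall g, mean g = 0 -> ip g g <= K * (ip g g + ip g (Pop g))) ->
  forall f, mean f = 0 -> ip (Pop f) (Pop f) <= (1 - K^-1) ^+ 2 * ip f f.
Proof.
move=> hK h1 h2 f hf.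
have hK0 : 0 < K by apply: lt_trans hK.
have hk : K * K^-1 = 1 by rewrite divff // gt_eqF.
have hk0 : 0 < K^-1 by rewrite invr_gt0.
have hk1 : K^-1 < 1 by rewrite invf_lt1.
set c := 1 - K^-1.
have hc : 0 < c by rewrite /c subr_gt0.
have c1 : forall g, mean g = 0 -> ip g (Pop g) <= c * ip g g.
  move=> g hg; have := h1 g hg; rewrite /c => h.
  have h' : 0 <= K * (ip g g - ip g (Pop g)) - ip g g by rewrite subr_ge0.
  have := mulr_ge0 (ltW hk0) h'; rewrite mulrBr mulrA mulVf ?gt_eqF // mul1r; lra.
have c2 : forall g, mean g = 0 -> - ip g (Pop g) <= c * ip g g.
  move=> g hg; have := h2 g hg; rewrite /c => h.
  have h' : 0 <= K * (ip g g + ip g (Pop g)) - ip g g by rewrite subr_ge0.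
  have := mulr_ge0 (ltW hk0) h'; rewrite mulrBr mulrA mulVf ?gt_eqF // mul1r; lra.
pose g1 := fun x => c * f x + (-1) * Pop f x.
pose g2 := fun x => c * f x + 1 * Pop f x.
have m1 : mean g1 = 0 by rewrite /g1 mean_lin mean_Pop hf; ring.
have m2 : mean g2 = 0 by rewrite /g2 mean_lin mean_Pop hf; ring.
have H1 := c2 _ m1.
have H2 := c1 _ m2.
move: H1 H2; rewrite /g1 /g2 !Pop_lin !ip_linl !ip_linr.
rewrite (ip_sym (Pop f) f) (B_sym f (Pop f)).
move=> H1 H2.
set a := ip f f in H1 H2 *.
set b := ip f (Pop f) in H1 H2 *.
set n := ip (Pop f) (Pop f) in H1 H2 *.
set q := ip (Pop f) (Pop (Pop f)) in H1 H2 *.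
have : 0 <= 2 * c * (c ^+ 2 * a - n) by nra.
move=> h; rewrite -subr_ge0.
have h2c : 0 < 2 * c by rewrite mulr_gt0.
by rewrite -(pmulr_rge0 _ h2c).
Qed.


Lemma Ppow_row t x : \sum_y Ppow P t x y = 1.
Proof.
elim: t => [|t IH] /=.
  by rewrite (bigD1 x) //= eqxx big1 ?addr0 // => y /negbTE; rewrite eq_sym => ->.
rewrite exchange_big /= -[RHS]IH; apply: eq_bigr => z _.
by rewrite -mulr_sumr P_row mulr1.
Qed.

Definition hh x t y := Ppow P t x y / pi y.
Definition uu x t y := hh x t y - 1.

Lemma hh_step x t : hh x t.+1 = Pop (hh x t).
Proof.
apply: funext => y; rewrite /hh /Pop /= mulr_suml; apply: eq_bigr => z _.
have hy := pi_neq0 y; have hz := pi_neq0 z.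
rewrite !Pdiv (w_sym z y); field.
by rewrite hy hz.
Qed.

Lemma uu_step x t : Pop (uu x t) = uu x t.+1.
Proof.
apply: funext => y; rewrite /uu hh_step /Pop.
under eq_bigr do rewrite mulrBr mulr1.
by rewrite sumrB P_row.
Qed.

Lemma mean_uu x t : mean (uu x t) = 0.
Proof.
rewrite /mean /uu.
under eq_bigr do rewrite mulrBr mulr1.
rewrite sumrB pi_sum -[X in _ - X = 0](Ppow_row t x); apply/eqP; rewrite subr_eq0; apply/eqP.
by apply: eq_bigr => y _; rewrite /hh mulrC divfK ?pi_neq0.
Qed.

Lemma ip_uu0 x : ip (uu x 0) (uu x 0) <= (pi x)^-1.
Proof.
rewrite /ip (bigD1 x) //=.
have -> : \sum_(y | y != x) pi y * uu x 0 y * uu x 0 y = \sum_(y | y != x) pi y.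
  by apply: eq_bigr => y hy; rewrite /uu /hh /= eq_sym (negbTE hy) mul0r; ring.
have hs := pi_sum; rewrite (bigD1 x) //= in hs.
have -> : \sum_(y | y != x) pi y = 1 - pi x by rewrite -hs; ring.
rewrite /uu /hh /= eqxx mul1r.
set k := (pi x)^-1.
have hk : pi x * k = 1 by rewrite /k mulfV ?pi_neq0.
have -> : pi x * (k - 1) * (k - 1) = (pi x * k) * k - 2 * (pi x * k) + pi x by ring.
rewrite hk; lra.
Qed.

Lemma tv_uu x t : tv_dist (Ppow P t x) pi = 2^-1 * \sum_y pi y * `|uu x t y|.
Proof.
rewrite /tv_dist; congr (_ * _); apply: eq_bigr => y _.
have -> : Ppow P t x y - pi y = pi y * uu x t y.
  by rewrite /uu /hh mulrBr mulr1 mulrC divfK ?pi_neq0.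
by rewrite normrM (gtr0_norm (pi_gt0 y)).
Qed.

Lemma jensen_pi u : (\sum_y pi y * `|u y|) ^+ 2 <= ip u u.
Proof.
set m := \sum_y pi y * `|u y|.
have h0 : 0 <= \sum_y pi y * (`|u y| - m) ^+ 2.
  apply: sumr_ge0 => y _; apply: mulr_ge0; [exact: ltW | exact: sqr_ge0].
have e : forall y, pi y * (`|u y| - m) ^+ 2
    = pi y * u y * u y - (2 * m) * (pi y * `|u y|) + m ^+ 2 * pi y.
  move=> y; rewrite sqrrB real_normK ?num_real //; ring.
rewrite (eq_bigr _ (fun y _ => e y)) big_split sumrB /= -!mulr_sumr pi_sum in h0.
rewrite -/m in h0; rewrite /ip; nra.
Qed.

Lemma tv_bound (c2 : R) : 0 <= c2 ->
  (forall f, mean f = 0 -> ip (Pop f) (Pop f) <= c2 * ip f f) ->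
  forall x t, (2 * tv_dist (Ppow P t x) pi) ^+ 2 <= c2 ^+ t * (pi x)^-1.
Proof.
move=> hc hcon x t.
have hq : ip (uu x t) (uu x t) <= c2 ^+ t * ip (uu x 0) (uu x 0).
  elim: t => [|t IH]; first by rewrite expr0 mul1r.
  rewrite -uu_step; apply: le_trans (hcon _ (mean_uu x t)) _.
  by rewrite exprS -mulrA; apply: ler_wpM2l.
rewrite tv_uu.
have -> : 2 * (2^-1 * \sum_y pi y * `|uu x t y|) = \sum_y pi y * `|uu x t y| by lra.
apply: le_trans (jensen_pi _) _; apply: le_trans hq _.
apply: ler_wpM2l; [exact: exprn_ge0 | exact: ip_uu0].
Qed.

End Markov.

Section Poinc.
Variable R : realType.
Variable S : finType.
Variables (w P : S -> S -> R) (pi : S -> R).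
Hypothesis w_sym : forall x y, w x y = w y x.
Hypothesis pi_def : forall x, pi x = \sum_y w x y.
Hypothesis pi_gt0 : forall x, 0 < pi x.
Hypothesis pi_sum : \sum_x pi x = 1.
Hypothesis P_def : forall x y, pi x * P x y = w x y.
Variables (v0 : S) (d : S -> nat) (p : S -> S) (Dd : nat) (N : R).
Hypothesis d_par : forall x, x != v0 -> (d (p x) < d x)%N.
Hypothesis d_le : forall x, (d x <= Dd)%N.
Hypothesis N_gt0 : 0 < N.
Definition lb x y : R := ((x != v0) && (y == p x))%:R + ((y != v0) && (x == p y))%:R
  + ((x == v0) && (y == v0))%:R *+ 2.
Hypothesis lb_le : forall x y, lb x y <= N * w x y.

Lemma sum_sub (F : S -> R) (P1 P2 : pred S) : (forall z, P1 z -> P2 z) ->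
  (forall z, 0 <= F z) -> \sum_(z | P1 z) F z <= \sum_(z | P2 z) F z.
Proof.
move=> h12 hF; rewrite [X in _ <= X](bigID P1) /=.
rewrite (eq_bigl P1); last by move=> z; case h: (P1 z); rewrite ?andbT ?andbF ?h12.
by rewrite lerDl; apply: sumr_ge0.
Qed.

Lemma GI (G s : S -> R) (sg r : R) : sg ^+ 2 = 1 -> 0 <= r -> G v0 ^+ 2 <= r / 4 ->
  (forall x, x != v0 -> G x = s x + sg * G (p x)) ->
  forall x, G x ^+ 2 <= ((d x)%:R + 4^-1) * (\sum_(z | (z != v0) && (d z <= d x)%N) s z ^+ 2 + r).
Proof.
move=> hsg hr h0 hG x.
have Sge0 : forall n, 0 <= \sum_(z | (z != v0) && (d z <= n)%N) s z ^+ 2.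
  by move=> n; apply: sumr_ge0 => z _; exact: sqr_ge0.
move: (leqnn (d x)); move: {2}(d x) => n; elim: n x => [|n IH] x hx.
  case hxv: (x == v0).
    move/eqP: hxv => ->; apply: le_trans h0 _.
    have := Sge0 (d v0); set Q := \sum_(_ | _) _ => hQ.
    have hd : 0 <= (d v0)%:R :> R by [].
    nra.
  by have := d_par (negbT hxv); rewrite leqn0 in hx; rewrite (eqP hx).
case hxv: (x == v0).
  move/eqP: hxv => ->; apply: le_trans h0 _.
  have := Sge0 (d v0); set Q := \sum_(_ | _) _ => hQ.
  have hd : 0 <= (d v0)%:R :> R by [].
  nra.
have hxv' := negbT hxv.
have hpx := d_par hxv'.
have hpn : (d (p x) <= n)%N by rewrite -ltnS; exact: leq_trans hpx hx.
have IHp := IH (p x) hpn.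
rewrite (hG x hxv').
have hdx : (d (p x))%:R + 1 <= (d x)%:R :> R.
  by rewrite -[1]/(1%:R) -natrD ler_nat addn1.
have hSx : s x ^+ 2 + \sum_(z | (z != v0) && (d z <= d (p x))%N) s z ^+ 2
    <= \sum_(z | (z != v0) && (d z <= d x)%N) s z ^+ 2.
  rewrite [X in _ <= X](bigD1 x) /=; last by rewrite hxv' leqnn.
  rewrite lerD2l; apply: sum_sub; last by move=> z; exact: sqr_ge0.
  move=> z /andP[hz hdz]; rewrite hz /=.
  have hzx : (d z < d x)%N by exact: leq_ltn_trans hdz hpx.
  rewrite (ltnW hzx) /=; apply/negP => /eqP hzx'; by rewrite hzx' ltnn in hzx.
move: IHp hSx hdx.
set Sy := \sum_(z | (z != v0) && (d z <= d (p x))%N) s z ^+ 2.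
set Sx := \sum_(z | (z != v0) && (d z <= d x)%N) s z ^+ 2.
set a := s x; set b := G (p x); set dy := (d (p x))%:R; set dx := (d x)%:R.
move=> IHp hSx hdx.
have hdy : 0 <= dy by rewrite /dy.
have hSy : 0 <= Sy by apply: Sge0.
set v := dy + 4^-1.
have hv : 0 < v by rewrite /v; lra.
have hb2 : (sg * b) ^+ 2 = b ^+ 2 by rewrite exprMn hsg mul1r.
have key : v * ((1 + v) * (a ^+ 2 + (Sy + r)) - (a + sg * b) ^+ 2) >= 0.
  have h1 : 0 <= (v * a - sg * b) ^+ 2 by apply: sqr_ge0.
  have h2 : 0 <= (1 + v) * (v * (Sy + r) - b ^+ 2).
    apply: mulr_ge0; first lra.
    by rewrite subr_ge0.
  move: h1 h2; rewrite -hb2; nra.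
have key2 : (a + sg * b) ^+ 2 <= (1 + v) * (a ^+ 2 + (Sy + r)).
  rewrite -subr_ge0; by rewrite -(pmulr_rge0 _ hv).
apply: le_trans key2 _.
apply: ler_pM; [lra | | rewrite /v; lra | lra].
apply: addr_ge0; [exact: sqr_ge0 | lra].
Qed.

Lemma sum_lb (F : S -> S -> R) : \sum_x \sum_y lb x y * F x y =
  \sum_(x | x != v0) F x (p x) + \sum_(y | y != v0) F (p y) y + 2 * F v0 v0.
Proof.
have e : forall x y, (((x != v0) && (y == p x))%:R + ((y != v0) && (x == p y))%:R
  + ((x == v0) && (y == v0))%:R *+ 2) * F x y =
  ((x != v0) && (y == p x))%:R * F x y + ((y != v0) && (x == p y))%:R * F x y
  + ((x == v0) && (y == v0))%:R *+ 2 * F x y :> R by move=> x y; ring.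
have -> : \sum_x \sum_y lb x y * F x y = \sum_x (\sum_y ((x != v0) && (y == p x))%:R * F x y
   + \sum_y ((y != v0) && (x == p y))%:R * F x y
   + \sum_y ((x == v0) && (y == v0))%:R *+ 2 * F x y).
  by apply: eq_bigr => x _; rewrite -!big_split; apply: eq_bigr => y _; exact: e.
rewrite !big_split /=.
congr (_ + _ + _).
- rewrite [RHS]big_mkcond; apply: eq_bigr => x _.
  rewrite (bigD1 (p x)) //= eqxx andbT big1 ?addr0; last first.
    by move=> y /negbTE ->; rewrite andbF mul0r.
  by case: (x != v0); rewrite ?mul1r ?mul0r.
- rewrite exchange_big [RHS]big_mkcond; apply: eq_bigr => y _ /=.
  rewrite (bigD1 (p y)) //= eqxx andbT big1 ?addr0; last first.
    by move=> x /negbTE ->; rewrite andbF mul0r.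
  by case: (y != v0); rewrite ?mul1r ?mul0r.
- rewrite (bigD1 v0) //= [X in _ + X]big1 ?addr0; last first.
    by move=> x /negbTE hx; apply: big1 => y _; rewrite hx /= mul0rn mul0r.
  rewrite (bigD1 v0) //= eqxx /= [X in _ + X]big1 ?addr0; last first.
    by move=> y /negbTE hy; rewrite hy ?andbF mul0rn mul0r.
  by rewrite mulr_natl.
Qed.

Lemma lb_ge0 x y : 0 <= lb x y.
Proof. by rewrite /lb; apply: addr_ge0; [apply: addr_ge0|]; rewrite ?mulrn_wge0 ?ler0n. Qed.

Lemma sum_lb_bound (F : S -> S -> R) : (forall x y, 0 <= F x y) ->
  \sum_x \sum_y lb x y * F x y <= N * \sum_x \sum_y w x y * F x y.
Proof.
move=> hF; rewrite mulr_sumr; apply: ler_sum => x _; rewrite mulr_sumr; apply: ler_sum => y _.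
by rewrite mulrA; apply: ler_wpM2r.
Qed.

Definition K0 : R := Dd%:R + 4^-1.

Lemma GI_all (G s : S -> R) (sg r : R) : sg ^+ 2 = 1 -> 0 <= r -> G v0 ^+ 2 <= r / 4 ->
  (forall x, x != v0 -> G x = s x + sg * G (p x)) ->
  forall x, G x ^+ 2 <= K0 * (\sum_(z | z != v0) s z ^+ 2 + r).
Proof.
move=> hsg hr h0 hG x; apply: le_trans (GI hsg hr h0 hG x) _.
have hs : \sum_(z | (z != v0) && (d z <= d x)%N) s z ^+ 2 <= \sum_(z | z != v0) s z ^+ 2.
  by apply: sum_sub => [z /andP[]//|z]; exact: sqr_ge0.
have hs0 : 0 <= \sum_(z | (z != v0) && (d z <= d x)%N) s z ^+ 2.
  by apply: sumr_ge0 => z _; exact: sqr_ge0.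
have hd : (d x)%:R <= Dd%:R :> R by rewrite ler_nat.
apply: ler_pM; rewrite /K0; try lra.
have : 0 <= (d x)%:R :> R by []; lra.
Qed.

Lemma poinc_minus g : mean pi g = 0 -> ip pi g g <= (K0 * N) * (ip pi g g - ip pi g (Pop P g)).
Proof.
move=> hm.
set Sm := \sum_(z | z != v0) (g z - g (p z)) ^+ 2.
have h1 : ip pi g g <= \sum_x pi x * (g x - g v0) ^+ 2.
  have -> : \sum_x pi x * (g x - g v0) ^+ 2 = ip pi g g - 2 * g v0 * mean pi g + g v0 ^+ 2 * \sum_x pi x.
    rewrite /ip /mean mulr_sumr mulr_sumr -sumrB -big_split; apply: eq_bigr => x _ /=; ring.
  rewrite hm pi_sum; have := sqr_ge0 (g v0); lra.
have h2 : \sum_x pi x * (g x - g v0) ^+ 2 <= K0 * Sm.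
  have hG : forall x, (g x - g v0) ^+ 2 <= K0 * (Sm + 0).
    apply: (@GI_all (fun x => g x - g v0) (fun z => g z - g (p z)) 1 0) => //.
    - by rewrite expr1n.
    - by rewrite subrr expr0n /= mul0r.
    - by move=> x _; ring.
  rewrite addr0 in hG.
  apply: le_trans (_ : \sum_x pi x * (K0 * Sm) <= _).
    by apply: ler_sum => x _; apply: ler_wpM2l; [exact: ltW|].
  by rewrite -mulr_suml pi_sum mul1r.
have h3 : Sm <= N * (ip pi g g - ip pi g (Pop P g)).
  rewrite (QmB w_sym pi_def P_def).
  have := sum_lb_bound (F := fun x y => (g x - g y) ^+ 2) (fun x y => sqr_ge0 _).
  rewrite sum_lb subrr expr0n /= mulr0 addr0.
  have -> : \sum_(y | y != v0) (g (p y) - g y) ^+ 2 = Sm.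
    by apply: eq_bigr => y _; rewrite -sqrrN opprB.
  move=> h; rewrite -/Sm in h; rewrite mulrCA; lra.
apply: le_trans h1 _; apply: le_trans h2 _.
rewrite -mulrA; apply: ler_wpM2l => //.
rewrite /K0; have : 0 <= Dd%:R :> R by []; lra.
Qed.

Lemma poinc_plus g : ip pi g g <= (K0 * N) * (ip pi g g + ip pi g (Pop P g)).
Proof.
set Sp := \sum_(z | z != v0) (g z + g (p z)) ^+ 2.
have h2 : ip pi g g <= K0 * (Sp + 4 * g v0 ^+ 2).
  have hG : forall x, g x ^+ 2 <= K0 * (Sp + 4 * g v0 ^+ 2).
    apply: (@GI_all g (fun z => g z + g (p z)) (-1) (4 * g v0 ^+ 2)).
    - by rewrite sqrrN expr1n.
    - by apply: mulr_ge0 => //; exact: sqr_ge0.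
    - have := sqr_ge0 (g v0); lra.
    - by move=> x _; ring.
  apply: le_trans (_ : \sum_x pi x * (K0 * (Sp + 4 * g v0 ^+ 2)) <= _).
    by apply: ler_sum => x _; rewrite -mulrA -expr2; apply: ler_wpM2l; [exact: ltW|].
  by rewrite -mulr_suml pi_sum mul1r.
have h3 : Sp + 4 * g v0 ^+ 2 <= N * (ip pi g g + ip pi g (Pop P g)).
  rewrite (QpB w_sym pi_def P_def).
  have := sum_lb_bound (F := fun x y => (g x + g y) ^+ 2) (fun x y => sqr_ge0 _).
  rewrite sum_lb.
  have -> : \sum_(y | y != v0) (g (p y) + g y) ^+ 2 = Sp.
    by apply: eq_bigr => y _; rewrite addrC.
  move=> h; rewrite -/Sp in h; rewrite [X in _ <= X]mulrCA.
  have e4 : (g v0 + g v0) ^+ 2 = 4 * g v0 ^+ 2 by ring.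
  rewrite e4 in h; lra.
apply: le_trans h2 _.
rewrite -mulrA; apply: ler_wpM2l => //.
rewrite /K0; have : 0 <= Dd%:R :> R by []; lra.
Qed.

End Poinc.

Lemma dmax_le (R : realType) (S : finType) (F : S -> R) (eps : R) :
  0 <= eps -> (forall x, F x <= eps) -> \big[Num.max/0]_x F x <= eps.
Proof.
move=> he hF; apply: (big_ind (fun v => v <= eps)) => //.
by move=> a b ha hb; rewrite ge_max ha hb.
Qed.

Lemma key_ineq (R : realType) (D M l2 lm le t : R) : 1 <= D -> 2 <= M -> 2^-1 <= l2 -> 0 <= lm -> le < 0 ->
  (2 * D + 1) * M * (l2 + lm - le) < t + 1 -> (D + 4^-1) * (2 * M) * (lm - l2 - 2 * le) <= 2 * t.
Proof.
move=> hD hM hl2 hlm hle hB.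
have u1 : 1 <= M * l2 by nra.
have u2 : 0 <= (M * l2 - 1) * (6 * D + 5 / 2) by apply: mulr_ge0; lra.
have u3 : 0 <= (M * lm) * (2 * D + 3 / 2) by apply: mulr_ge0; [apply: mulr_ge0|]; lra.
have u4 : 0 <= M * (- le) by apply: mulr_ge0; lra.
nra.
Qed.

Lemma lin1 (R : realType) (a b c X : R) : a - b - 2 * c <= X -> - X <= b + b + (c + c) - (b + a).
Proof. move=> h; lra. Qed.

Lemma sq_le (R : realType) (T e : R) : 0 <= T -> 0 < e -> (2 * T) ^+ 2 <= 4 * e ^+ 2 -> T <= e.
Proof. move=> h1 h2 h3; nra. Qed.

Unset Implicit Arguments.

Theorem corollary2p5 (R : realType) (S : finType) (e : rel S) (v0 : S)
    (eps : R) :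
  is_tree e -> 0 < eps < 1 ->
  exists t : nat,
    is_tmix (srw R e v0) (stat R e v0) eps t /\
    t%:R <= ((2 * diam e + 1)%N)%:R * (nE e)%:R
            * ln ((2 * nE e)%:R / eps).
Proof.
move=> [[esym eirr] [conn _]] /andP[he0 he1].
set P := srw R e v0.
set pi := stat R e v0.
pose a x y : R := (e x y)%:R + ((x == v0) && (y == v0))%:R *+ 2.
set N := \sum_z (deg e v0 z)%:R : R.
have hdeg x : (deg e v0 x)%:R = \sum_y a x y.
  rewrite /deg natrD card_sumb natr_sum big_split /=; congr (_ + _).
    by apply: eq_bigr => y _; rewrite inE.
  rewrite (bigD1 v0) //= eqxx andbT big1 ?addr0; last first.
    by move=> y /negbTE ->; rewrite andbF mul0rn.
  by rewrite natrM mulr_natl.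
have hdeg_pos x : (0 < deg e v0 x)%N.
  rewrite /deg; case hx: (x == v0); first by rewrite muln1 addn2.
  have /andP[hexp _] := par_spec conn (negbT hx).
  by rewrite muln0 addn0; apply/card_gt0P; exists (par e v0 x); rewrite inE.
have hdegR x : 0 < (deg e v0 x)%:R :> R by rewrite ltr0n.
have hNnat : N = (2 * nE e)%:R by rewrite /N -natr_sum sum_deg.
have hN0 : 0 < N by rewrite /N; apply: lt_le_trans (hdegR v0) _; rewrite (bigD1 v0) //= lerDl; apply: sumr_ge0.
pose w x y := a x y / N.
have w_sym : forall x y, w x y = w y x by move=> x y; rewrite /w /a (esym x y) andbC.
have pi_def : forall x, pi x = \sum_y w x y.
  by move=> x; rewrite /pi /stat hdeg mulr_suml.
have pi_gt0 : forall x, 0 < pi x by move=> x; rewrite /pi /stat divr_gt0.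
have pi_sum : \sum_x pi x = 1 by rewrite /pi /stat -mulr_suml divff // gt_eqF.
have P_def : forall x y, pi x * P x y = w x y.
  move=> x y; rewrite /pi /P /w /stat /srw -/N.
  have := hdegR x; have := hN0; move=> h1 h2.
  by rewrite /a; field; rewrite !gt_eqF.
set Dd := diam e.
set M : R := (nE e)%:R.
have hM1 : 1 <= M by rewrite /M ler1n /nE.
have hB0 : 0 <= ((2 * Dd + 1)%N)%:R * M * ln ((2 * nE e)%:R / eps).
  apply: mulr_ge0; first by apply: mulr_ge0 => //; lra.
  apply: ln_ge0; rewrite ler_pdivlMr // mul1r natrM -/M; lra.
case: (pickP (fun x => x != v0)) => [x1 hx1 | hall]; last first.
  have hv : forall x, x = v0 by move=> x; apply/eqP; rewrite -[x == v0]negbK hall.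
  have hpi : pi v0 = 1.
    rewrite -pi_sum (bigD1 v0) //= big1 ?addr0 // => y; by rewrite hall.
  have h0 : dmax P pi 0 <= eps.
    apply: dmax_le; first exact: ltW.
    move=> x; rewrite (hv x) /tv_dist (bigD1 v0) //= big1 ?addr0; last by move=> y; rewrite hall.
    by rewrite eqxx hpi subrr normr0 mulr0; exact: ltW.
  exists 0%N; split; last by [].
  by split => // s.
have hd1 : (1 <= Dd)%N.
  apply: leq_trans (depth_le e v0 x1); rewrite lt0n; apply/negP => /eqP h.
  by have := depth0 conn h; move/eqP: hx1.
have hM2 : 2 <= M.
  have : (3 <= 2 * nE e)%N.
    rewrite -(sum_deg esym eirr v0) (bigD1 v0) //= (bigD1 x1) //=.
    rewrite addnA; apply: leq_trans (leq_addr _ _).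
    have h1 := hdeg_pos x1.
    have h2 : (2 <= deg e v0 v0)%N by rewrite /deg eqxx muln1 leq_addl.
    exact: (leq_add h2 h1).
  by move=> h; rewrite /M ler_nat; move: h; case: (nE e) => [|[|n]].
have hN : N = 2 * M by rewrite hNnat natrM.
set D : R := Dd%:R.
have hD1 : 1 <= D by rewrite /D ler1n.
set K := K0 R Dd * N.
have hK : 1 < K by rewrite /K /K0 -/D hN; nra.
have lb_le : forall x y, lb R v0 (par e v0) x y <= N * w x y.
  move=> x y; rewrite /w mulrC divfK ?gt_eqF // /lb /a.
  case hxy: ((x == v0) && (y == v0)).
    move/andP: hxy => [/eqP -> /eqP ->]; rewrite eqxx /= eirr /= !add0r //.
  rewrite lerD2r.
  case h1: ((x != v0) && (y == par e v0 x)); case h2: ((y != v0) && (x == par e v0 y)) => //=.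
  - move/andP: h1 => [hx /eqP hy]; move/andP: h2 => [hy' /eqP hx'].
    have := par_spec conn hx; have := par_spec conn hy'.
    rewrite -hy -hx' => /andP[_ l1] /andP[_ l2].
    by have := ltn_trans l1 l2; rewrite ltnn.
  - move/andP: h1 => [hx /eqP ->]; case/andP: (par_spec conn hx) => -> _. by rewrite addr0.
  - move/andP: h2 => [hy /eqP ->]; case/andP: (par_spec conn hy) => h _; by rewrite esym h add0r.
  - by rewrite add0r ler0n.
have d_par : forall x, x != v0 -> (depth e v0 (par e v0 x) < depth e v0 x)%N.
  by move=> x hx; have /andP[_ ->] := par_spec conn hx.
have d_le : forall x, (depth e v0 x <= Dd)%N by move=> x; exact: depth_le.
have hm := poinc_minus w_sym pi_def pi_gt0 pi_sum P_def d_par d_le lb_le.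
have hp := poinc_plus w_sym pi_def pi_gt0 pi_sum P_def d_par d_le lb_le.
have hcon := contract_L2 w_sym pi_def P_def hK hm (fun g _ => hp g).
set c := 1 - K^-1.
have hK0 : 0 < K by lra.
have hc0 : 0 <= c by rewrite /c subr_ge0 invf_le1 //; lra.
have htv := tv_bound w_sym pi_def pi_gt0 pi_sum P_def (exprn_ge0 2 hc0) hcon.
set B := ((2 * Dd + 1)%N)%:R * M * ln ((2 * nE e)%:R / eps) in hB0 *.
set t0 := Num.truncn B.
have /andP[ht0 ht0'] := truncn_itv hB0; rewrite -/t0 in ht0 ht0'.
have hl2 : 2^-1 <= ln (2 : R).
  have h := expR_ge1Dx (- (2^-1) : R).
  have h' : ln (2^-1 : R) <= - 2^-1.
    have e1 := expRK (- (2^-1) : R).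
    rewrite -[X in _ <= X]e1 ler_ln ?posrE ?expR_gt0 //; lra.
  rewrite lnV ?posrE // in h'; lra.
set l2 := ln (2 : R) in hl2 *.
have hlm : 0 <= ln M by apply: ln_ge0.
set lm := ln M in hlm *.
have hle : ln eps < 0 by apply: ln_lt0; rewrite he0 he1.
set le := ln eps in hle *.
have hM0 : 0 < M by lra.
have hlnB : ln ((2 * nE e)%:R / eps) = l2 + lm - le.
  rewrite natrM -/M lnM ?posrE ?invr_gt0 ?mulr_gt0 // lnM ?posrE // lnV ?posrE //.
have hBe : B = (2 * D + 1) * M * (l2 + lm - le).
  by rewrite /B hlnB natrD natrM.
have hkey : K * (lm - l2 - 2 * le) <= 2 * t0%:R.
  have hBt : (2 * D + 1) * M * (l2 + lm - le) < t0%:R + 1 by rewrite -hBe natr1.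
  rewrite /K /K0 -/D hN; exact: key_ineq hD1 hM2 hl2 hlm hle hBt.
have htvx : forall x, tv_dist (Ppow P t0 x) pi <= eps.
  move=> x.
  have hpi : (pi x)^-1 <= N.
    rewrite /pi /stat invf_div -/N ler_pdivrMr // ler_peMr //; first exact: ltW.
    by rewrite ler1n.
  have hc1 : c <= expR (- K^-1) by have := expR_ge1Dx (- K^-1); rewrite /c.
  have hcp : c ^+ 2 ^+ t0 <= expR ((2 * t0)%:R * - K^-1).
    rewrite -exprM expRM_natl; apply: lerXn2r => //; rewrite nnegrE ?expR_ge0 //.
  have hexp : expR ((2 * t0)%:R * - K^-1) <= 4 * eps ^+ 2 / N.
    have hpos : 0 < 4 * eps ^+ 2 / N by apply: divr_gt0 => //; apply: mulr_gt0 => //; exact: exprn_gt0.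
    rewrite -[X in _ <= X](lnK hpos) ler_expR.
    rewrite hN lnM ?posrE ?invr_gt0 ?mulr_gt0 ?exprn_gt0 // lnV ?posrE ?mulr_gt0 //.
    rewrite lnM ?posrE ?exprn_gt0 // lnXn // lnM ?posrE //.
    rewrite (_ : (4 : R) = 2 * 2); last by rewrite -natrM.
    rewrite lnM ?posrE // -/l2 -/lm -/le.
    have : (lm - l2 - 2 * le) <= (2 * t0)%:R / K.
      by rewrite ler_pdivlMr // mulrC natrM.
    rewrite mulrN mulr2n; exact: lin1.
  have hx0 := htv x t0.
  have hge : 0 <= tv_dist (Ppow P t0 x) pi.
    by rewrite /tv_dist; apply: mulr_ge0; [rewrite invr_ge0 ler0n|apply: sumr_ge0 => y _; exact: normr_ge0].
  have hfin : (2 * tv_dist (Ppow P t0 x) pi) ^+ 2 <= 4 * eps ^+ 2.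
    apply: le_trans hx0 _.
    apply: le_trans (_ : expR ((2 * t0)%:R * - K^-1) * N <= _).
      apply: ler_pM hcp hpi; [exact: exprn_ge0 (exprn_ge0 _ hc0) | rewrite invr_ge0; exact: ltW (pi_gt0 x)].
    by rewrite -ler_pdivlMr.
  exact: sq_le hge he0 hfin.
have hdm : dmax P pi t0 <= eps by apply: dmax_le => //; exact: ltW.
have hex : exists t, dmax P pi t <= eps by exists t0.
case: (ex_minnP hex) => m hm0 hmin.
exists m; split.
  split => // s hs hs'; have := hmin s hs'; by rewrite leqNgt hs.
apply: le_trans ht0; rewrite ler_nat; exact: hmin.
Qed.
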